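(* Let $a,b,c>0$ and let $\lambda_0>0>\lambda_1$, $\lambda_2>0$ be the three real roots of $p_3(\lambda)=\lambda^3-b\lambda^2-(a+c)\lambda+cb$, labeled so that $\lambda_0\in(\max(b,\sqrt c),\infty)$, $\lambda_1\in(-\infty,-\sqrt c)$, $\lambda_2\in(0,\min(b,\sqrt c))$. Set $d_0^\pm=\lambda_1\pm\lambda_2$, $d_1^\pm=\lambda_0\pm\lambda_2$, $d_2^\pm=\lambda_0\pm\lambda_1$. For $L\ge0$ define the $2\times2$ matrix $C^0=(c_{ij})$ by $$c_{11}=\sum_{k=0}^2(-1)^k\lambda_k^2\frac{d_k^-}{d_k^+}e^{\lambda_kL},\quad c_{12}=\sum_{k=0}^2(-1)^k\lambda_k d_k^-e^{\lambda_kL},$$ $$c_{21}=\sum_{k=0}^2(-1)^k(a+b\lambda_k)d_k^-e^{\lambda_kL},\quad c_{22}=\sum_{k=0}^2(-1)^k\frac{a+b\lambda_k}{\lambda_k}d_k^-d_k^+e^{\lambda_kL}.$$ Then $\det(C^0)>0$ for all $L\ge0$; in particular $C^0$ is regular, so the linear system $C^0 s=\mathbf b$ with $\mathbf b=(0,-\gamma a d_0^-d_1^-d_2^-/c)^T$ has a unique solution $s=(s_1,s_2)^T$ for every $\gamma\in\mathbb R$.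
   Context: In the paper this system determines the shooting parameters $s_1=T_f'(0)$, $s_2=T_s'(0)$ of a two-temperature boundary value problem; $\gamma$ is a real parameter. *)

(* Defs.v *)
From HB Require Import structures.
From mathcomp Require Import all_boot all_order all_algebra.
From mathcomp Require Import all_classical all_reals all_analysis.
Set Implicit Arguments. Unset Strict Implicit. Unset Printing Implicit Defensive.
Import Order.TTheory GRing.Theory Num.Theory.
Local Open Scope ring_scope.

Section Defs.
Variable R : realType.

Definition p3 (a b c x : R) : R := x ^+ 3 - b * x ^+ 2 - (a + c) * x + c * b.

Definition lam (l0 l1 l2 : R) (k : 'I_3) : R :=
  match val k with 0%N => l0 | 1%N => l1 | _ => l2 end.

Definition dm (l0 l1 l2 : R) (k : 'I_3) : R :=
  match val k with 0%N => l1 - l2 | 1%N => l0 - l2 | _ => l0 - l1 end.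
Definition dp (l0 l1 l2 : R) (k : 'I_3) : R :=
  match val k with 0%N => l1 + l2 | 1%N => l0 + l2 | _ => l0 + l1 end.

Definition c11 (l0 l1 l2 L : R) : R :=
  \sum_(k < 3) (-1) ^+ k * (lam l0 l1 l2 k) ^+ 2
     * (dm l0 l1 l2 k / dp l0 l1 l2 k) * expR (lam l0 l1 l2 k * L).
Definition c12 (l0 l1 l2 L : R) : R :=
  \sum_(k < 3) (-1) ^+ k * lam l0 l1 l2 k * dm l0 l1 l2 k
     * expR (lam l0 l1 l2 k * L).
Definition c21 (a b l0 l1 l2 L : R) : R :=
  \sum_(k < 3) (-1) ^+ k * (a + b * lam l0 l1 l2 k) * dm l0 l1 l2 k
     * expR (lam l0 l1 l2 k * L).
Definition c22 (a b l0 l1 l2 L : R) : R :=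
  \sum_(k < 3) (-1) ^+ k * ((a + b * lam l0 l1 l2 k) / lam l0 l1 l2 k)
     * dm l0 l1 l2 k * dp l0 l1 l2 k * expR (lam l0 l1 l2 k * L).

Definition C0 (a b l0 l1 l2 L : R) : 'M[R]_2 :=
  \matrix_(i < 2, j < 2)
    if val i == 0%N then (if val j == 0%N then c11 l0 l1 l2 L else c12 l0 l1 l2 L)
    else (if val j == 0%N then c21 a b l0 l1 l2 L else c22 a b l0 l1 l2 L).

Definition rhs (a c gamma l0 l1 l2 : R) : 'cV[R]_2 :=
  \col_(i < 2)
    if val i == 0%N then 0
    else - (gamma * a * (l1 - l2) * (l0 - l2) * (l0 - l1) / c).

End Defs.

(* Main.v *)
Require Import Defs.
From HB Require Import structures.
From mathcomp Require Import all_boot all_order all_algebra.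
From mathcomp Require Import all_classical all_reals all_analysis.
From mathcomp Require Import ring lra.
Import Order.TTheory GRing.Theory Num.Theory.
Local Open Scope ring_scope.

Ltac pos := repeat first [apply: addr_gt0 | apply: mulr_gt0 | apply: exprn_gt0 | apply: ltr0Sn | apply: ltr01 | assumption].

Lemma det22 (R : comPzRingType) (A : 'M[R]_2) : \det A = A 0 0 * A 1 1 - A 0 1 * A 1 0.
Proof.
rewrite (expand_det_row _ 0) !big_ord_recl big_ord0 /cofactor.
rewrite !det_mx11 /= !mxE /=.
have e1 : lift (0:'I_2) (0:'I_1) = 1 by apply: val_inj.
have e2 : lift (ord0 : 'I_2) (0:'I_1) = 1 by apply: val_inj.
have e3 : lift (ord0 : 'I_2) (ord0:'I_1) = 1 by apply: val_inj.
have e4 : lift (1 : 'I_2) (0:'I_1) = 0 by apply: val_inj.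
have e0 : (ord0 : 'I_2) = 0 by apply: val_inj.
rewrite ?e1 ?e2 ?e3 ?e0 ?e4 /=.
rewrite /bump /= expr0 expr1; ring.
Qed.

Section Core.
Variable R : realFieldType.
Variables p r s : R.
Hypotheses (hp : 0 < p) (hr : 0 < r) (hs : 0 < s).

Definition M12 := r * (p^+2 - r * s)^+2 + (p^+5 + 3%:R * p^+4 * s + p^+3 * r * s + 3%:R * p^+3 * s^+2 + p^+2 * r^+2 * s + 2%:R * p^+2 * r * s^+2 + p^+2 * s^+3 + 2%:R * p * r^+2 * s^+2 + p * r * s^+3 + r^+2 * s^+3).
Definition Mq := p^+6 + 2%:R * p^+5 * r + 4%:R * p^+5 * s + 5%:R * p^+4 * r^+2 + 9%:R * p^+4 * r * s + 6%:R * p^+4 * s^+2 + 4%:R * p^+3 * r^+3 + 12%:R * p^+3 * r^+2 * s + 14%:R * p^+3 * r * s^+2 + 4%:R * p^+3 * s^+3 + p^+2 * r^+4 + 6%:R * p^+2 * r^+3 * s + 14%:R * p^+2 * r^+2 * s^+2 + 9%:R * p^+2 * r * s^+3 + p^+2 * s^+4 + p * r^+4 * s + 6%:R * p * r^+3 * s^+2 + 7%:R * p * r^+2 * s^+3 + 2%:R * p * r * s^+4 + r^+4 * s^+2 + 2%:R * r^+3 * s^+3 + r^+2 * s^+4.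
Definition T12 := (p+r+s) * r * (2%:R * p+r) * M12.
Definition S2 := - ((2%:R * p+2%:R * r+s) * s * Mq).
Definition S3 := - ((p+s)^+2 * s * (2%:R * p+2%:R * r+s) * (r+s) * (2%:R * p+r+s) * r * (2%:R * p+r)).

Lemma M12_gt0 : 0 < M12.
Proof.
rewrite /M12; apply: ltr_wpDl; first by apply: mulr_ge0; [exact: ltW| exact: sqr_ge0].
pos.

Qed.
Lemma Mq_gt0 : 0 < Mq. Proof. rewrite /Mq; pos. Qed.
Lemma T12_gt0 : 0 < T12. Proof. rewrite /T12; have := M12_gt0; pos. Qed.
Lemma S2_lt0 : S2 < 0. Proof. rewrite /S2 oppr_lt0; have := Mq_gt0; pos. Qed.
Lemma S3_lt0 : S3 < 0. Proof. rewrite /S3 oppr_lt0; pos. Qed.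
End Core.

Lemma Nneg (R : realFieldType) (S2 S3 T12 X Y Z : R) : S2<0 -> S3<0 -> 0<=T12 -> 0<Y -> 0 < X -> Y<=X -> Z<=X ->
  (S3-S2) * Y + (S2-T12) * X + T12 * Z < 0.
Proof.
move=> hS2 hS3 h12 hY hX hYX hZX.
have h1 : T12 * (Z - X) <= 0 by apply: mulr_ge0_le0 => //; rewrite subr_le0.
case: (leP 0 (S3 - S2)) => hd.
- have h2 : (S3 - S2) * (Y - X) <= 0 by apply: mulr_ge0_le0 => //; rewrite subr_le0.
  have h3 : S3 * X < 0 by rewrite pmulr_llt0.
  have e : (S3-S2)*Y + (S2-T12)*X + T12*Z = S3*X + (S3-S2)*(Y-X) + T12*(Z-X) by ring.
  rewrite e; lra.
- have h2 : (S3 - S2) * Y < 0 by rewrite pmulr_llt0.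
  have h3 : S2 * X < 0 by rewrite pmulr_llt0.
  have e : (S3-S2)*Y + (S2-T12)*X + T12*Z = (S3-S2)*Y + S2*X + T12*(Z-X) by ring.
  rewrite e; lra.
Qed.

Theorem lemma1 (R : realType) (a b c l0 l1 l2 : R) :
  0 < a -> 0 < b -> 0 < c ->
  p3 a b c l0 = 0 -> p3 a b c l1 = 0 -> p3 a b c l2 = 0 ->
  Num.max b (Num.sqrt c) < l0 ->
  l1 < - Num.sqrt c ->
  0 < l2 -> l2 < Num.min b (Num.sqrt c) ->
  forall L : R, 0 <= L ->
    0 < \det (C0 a b l0 l1 l2 L) /\
    forall gamma : R, exists! s : 'cV[R]_2, C0 a b l0 l1 l2 L *m s = rhs a c gamma l0 l1 l2.
Proof.
move=> ha hb hc H0 H1 H2 hmax hl1 hl2 hmin L hL.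
have hdet : 0 < \det (C0 a b l0 l1 l2 L).
  move: hmax hmin; rewrite gt_max lt_min => /andP[hbl0 hcl0] /andP[hl2b hl2c].
  have hsq : 0 <= Num.sqrt c by apply: sqrtr_ge0.
  have n01 : l0 - l1 != 0 by rewrite subr_eq0; apply/eqP => e; lra.
  have n02 : l0 - l2 != 0 by rewrite subr_eq0; apply/eqP => e; lra.
  have n12 : l1 - l2 != 0 by rewrite subr_eq0; apply/eqP => e; lra.
  have Q01 : l0^+2 + l0 * l1 + l1^+2 - b * (l0+l1) - (a+c) = 0.
    have : p3 a b c l0 - p3 a b c l1 = (l0-l1) * (l0^+2 + l0 * l1 + l1^+2 - b * (l0+l1) - (a+c)) by rewrite /p3; ring.
    by rewrite H0 H1 subrr => /esym/eqP; rewrite mulf_eq0 (negbTE n01) /= => /eqP.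
  have Q02 : l0^+2 + l0 * l2 + l2^+2 - b * (l0+l2) - (a+c) = 0.
    have : p3 a b c l0 - p3 a b c l2 = (l0-l2) * (l0^+2 + l0 * l2 + l2^+2 - b * (l0+l2) - (a+c)) by rewrite /p3; ring.
    by rewrite H0 H2 subrr => /esym/eqP; rewrite mulf_eq0 (negbTE n02) /= => /eqP.
  have eb : b = l0 + l1 + l2.
    have : (l1 - l2) * (l0 + l1 + l2 - b) = (l0^+2 + l0 * l1 + l1^+2 - b * (l0+l1) - (a+c)) - (l0^+2 + l0 * l2 + l2^+2 - b * (l0+l2) - (a+c)) by ring.
    rewrite Q01 Q02 subrr.
    move/eqP; rewrite mulf_eq0 (negbTE n12) /= subr_eq0 => /eqP e; by rewrite e.
  have eac : a + c = - (l0 * l1 + l0 * l2 + l1 * l2).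
    by move: Q01; rewrite eb => e; apply/eqP; rewrite -subr_eq0 -oppr_eq0 -e; apply/eqP; ring.
  have ecb : c * b = - (l0 * l1 * l2).
    have : p3 a b c l0 = 0 by [].
    rewrite /p3 eac eb => e. apply/eqP; rewrite -subr_eq0 -e; apply/eqP; ring.
  set E0 := expR (l0 * L). set E1 := expR (l1 * L). set E2 := expR (l2 * L).
  have hE0 : 0 < E0 by apply: expR_gt0.
  have hE1 : 0 < E1 by apply: expR_gt0.
  have hE2 : 0 < E2 by apply: expR_gt0.
  have hE12 : E1 <= E2 by rewrite ler_expR; apply: ler_wpM2r => //; lra.
  have hE01 : E1 <= E0 by rewrite ler_expR; apply: ler_wpM2r => //; lra.
  have hY : E0 * E1 <= E0 * E2 by rewrite ler_pM2l.
  have hZ : E1 * E2 <= E0 * E2 by rewrite ler_pM2r.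
  rewrite det22 !mxE /= /c11 /c12 /c21 /c22 !big_ord_recl !big_ord0 /=.
  rewrite /lam /dm /dp /bump /= -/E0 -/E1 -/E2.
  clearbody E0 E1 E2.
  have [p [r [s [hp [hr [hs [e0 [e1 e2]]]]]]]] : exists p r s : R, 0<p /\ 0<r /\ 0<s /\ l0 = p+r+s /\ l1 = -(p+r) /\ l2 = p.
    exists l2, (-l1-l2), (l0+l1); do ! split; try lra.
  have ea : a = (l0 * l1 * l2)/b - (l0 * l1 + l0 * l2 + l1 * l2).
    have hbn : b != 0 by rewrite gt_eqF.
    have ec : c = - (l0 * l1 * l2) / b by rewrite -ecb mulfK.
    apply/eqP; rewrite -subr_eq0; apply/eqP. rewrite -[a](addrK c) eac ec. field. done.
  clear hbl0 hcl0 hl2b hl2c hsq Q01 Q02 eac ecb H0 H1 H2 hl1 hl2 n01 n02 n12.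
  subst a. subst b. subst l0 l1 l2.
  have hN := @Nneg R _ _ _ _ _ _ (@S2_lt0 R p r s hp hr hs) (@S3_lt0 R p r s hp hr hs) (ltW (@T12_gt0 R p r s hp hr hs)) (mulr_gt0 hE0 hE1) (mulr_gt0 hE0 hE2) hY hZ.
  set N := (_ * _ + _ * _ + _ * _) in hN.
  have hpos : 0 < ((2%:R * p+r) * (r+s) * (2%:R * p+2%:R * r+s)) / ((p+r+s) * (p+r) * p * r * (2%:R * p+r+s) * s) * (- N).
    apply: mulr_gt0; last by rewrite oppr_gt0.
    apply: divr_gt0; pos.
  apply: (lt_le_trans hpos); rewrite le_eqVlt; apply/orP; left; apply/eqP.
  rewrite /N /S3 /S2 /T12 /M12 /Mq.
  field.
  by repeat (apply/andP; split); apply/eqP => h; lra.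
split => // gamma.
have hu : C0 a b l0 l1 l2 L \in unitmx by rewrite unitmxE unitfE gt_eqF.
exists (invmx (C0 a b l0 l1 l2 L) *m rhs a c gamma l0 l1 l2); split.
  by rewrite mulmxA mulmxV // mul1mx.
by move=> s' hs'; rewrite -hs' mulmxA mulVmx // mul1mx.
Qed.
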